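(* Let $k \geq 2$ be an integer. Let $\mathbb{R}^2_+=\{(x,y): y>0\}$ and $\mathbb{R}^2_-=\{(x,y): y<0\}$. Fix a $(k+1)$-element set $K=\{y_1,\ldots,y_{k+1}\} \subset \mathbb{R}^2_-$. Let $U$ be the family of all $k$-element subsets of $\mathbb{R}^2_-$, let $O$ be the initial ordinal of cardinality $\mathfrak{c}=2^{\aleph_0}$ (so $|O|=\mathfrak{c}$ and $|\{\alpha \in O: \alpha<\lambda\}|<\mathfrak{c}$ for every $\lambda\in O$), and let $\lambda \mapsto a^{\lambda}=\{a^{\lambda}_1,\ldots,a^{\lambda}_k\}$ be a bijection from $O$ onto $U$. Then there exist families of sets $\{A_\lambda\}_{\lambda\in O}$ and $\{B_\lambda\}_{\lambda \in O}$, increasing in the sense that $\lambda_1<\lambda_2$ implies $A_{\lambda_1}\subseteq A_{\lambda_2}$ and $B_{\lambda_1}\subseteq B_{\lambda_2}$, such that for every $\lambda \in O$: (1) $A_\lambda, B_\lambda \subset \{(x,0): x \in \mathbb{R}\}$; (2) $A_\lambda \cap B_\lambda=\emptyset$; (3) $|A_\lambda|,|B_\lambda| \leq \max(|\lambda|,\aleph_0) < \mathfrak{c}$; (4) there is a point $z \in \mathbb{R}^2_+$ that sees every point of $a^\lambda$ via $A_\lambda$, while no point $z\in\mathbb{R}^2_+$ sees all points of $K$ via $A_\lambda$.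
   Context: For $z \in \mathbb{R}^2_+$, $y \in \mathbb{R}^2_-$ and a subset $A$ of the $x$-axis, ''$z$ sees $y$ via $A$'' means that the segment $[z,y]$ is contained in $\mathbb{R}^2_+ \cup A \cup \mathbb{R}^2_-$ (equivalently, the intersection point of $[z,y]$ with the $x$-axis lies in $A$). For an ordinal $\lambda$, $|\lambda|$ denotes its cardinality (the cardinality of the set of ordinals smaller than $\lambda$). The axiom of choice is assumed. *)

(* Defs.v *)
From Stdlib Require Import Reals List.
Open Scope R_scope.

Definition point := (R * R)%type.

Definition upper (p : point) : Prop := 0 < snd p.
Definition lower (p : point) : Prop := snd p < 0.

Definition on_x_axis (p : point) : Prop := snd p = 0.

Definition seg_pt (z y : point) (t : R) : point :=
  ((1 - t) * fst z + t * fst y, (1 - t) * snd z + t * snd y).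

Definition sees (A : point -> Prop) (z y : point) : Prop :=
  forall t, 0 <= t <= 1 ->
    upper (seg_pt z y t) \/ A (seg_pt z y t) \/ lower (seg_pt z y t).

Definition has_card (S : point -> Prop) (n : nat) : Prop :=
  exists l : list point, NoDup l /\ length l = n /\ (forall p, S p <-> In p l).

Definition injective {X Y : Type} (f : X -> Y) : Prop :=
  forall x1 x2, f x1 = f x2 -> x1 = x2.

Definition card_le (X Y : Type) : Prop := exists f : X -> Y, injective f.

Definition card_eq_c (X : Type) : Prop :=
  exists f : X -> R, injective f /\ (forall r, exists x, f x = r).

Definition card_lt_c (X : Type) : Prop := ~ card_le R X.

Definition segment {O : Type} (lt : O -> O -> Prop) (l : O) : Type :=
  { a : O | lt a l }.

Definition strict_well_order {O : Type} (lt : O -> O -> Prop) : Prop :=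
  (forall x, ~ lt x x) /\
  (forall x y z, lt x y -> lt y z -> lt x z) /\
  (forall x y, lt x y \/ x = y \/ lt y x) /\
  well_founded lt.

Definition initial_ordinal_c (O : Type) (lt : O -> O -> Prop) : Prop :=
  strict_well_order lt /\ card_eq_c O /\
  (forall l : O, card_lt_c (segment lt l)).

(* Main.v *)
Require Import Defs.
From Stdlib Require Import Reals Lra Lia List ClassicalEpsilon Classical FunctionalExtensionality Runcountable Cantor FinFun Wellfounded.
Open Scope R_scope.

Lemma cl_refl (A : Type) : card_le A A.
Proof. exists (fun x => x). intros x y H; exact H. Qed.

Lemma cl_trans (A B C : Type) : card_le A B -> card_le B C -> card_le A C.
Proof.
  intros [f Hf] [g Hg]. exists (fun x => g (f x)). intros x y H. apply Hf, Hg, H.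
Qed.

Lemma cl_prod (A A' B B' : Type) : card_le A A' -> card_le B B' -> card_le (A*B) (A'*B').
Proof.
  intros [f Hf] [g Hg]. exists (fun p => (f (fst p), g (snd p))).
  intros [x1 y1] [x2 y2] H. simpl in H. injection H as H1 H2.
  rewrite (Hf _ _ H1), (Hg _ _ H2). reflexivity.
Qed.

Lemma cl_sum (A A' B B' : Type) : card_le A A' -> card_le B B' -> card_le (A+B) (A'+B').
Proof.
  intros [f Hf] [g Hg]. exists (fun p => match p with inl x => inl (f x) | inr y => inr (g y) end).
  intros [x1|y1] [x2|y2] H; try discriminate; injection H as H.
  - rewrite (Hf _ _ H); reflexivity.
  - rewrite (Hg _ _ H); reflexivity.
Qed.

Definition listable (T : Type) := exists l : list T, forall x, In x l.

Lemma nat_not_listable (T : Type) : card_le nat T -> listable T -> False.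
Proof.
  intros [f Hf] [l Hl].
  assert (HN : NoDup (map f (seq 0 (S (length l))))).
  { apply NoDup_map_NoDup_ForallPairs.
    - intros a b _ _ H. apply Hf, H.
    - apply seq_NoDup. }
  assert (Hi : incl (map f (seq 0 (S (length l)))) l) by (intros x _; apply Hl).
  pose proof (NoDup_incl_length HN Hi) as HH.
  rewrite length_map, length_seq in HH. lia.
Qed.

Lemma listable_or_nat (T : Type) : listable T \/ card_le nat T.
Proof.
  destruct (classic (listable T)) as [H|H]; [left; exact H|right].
  assert (Hex : forall l : list T, exists x, ~ In x l).
  { intros l. apply NNPP. intro C. apply H. exists l. intro x.
    apply NNPP. intro C2. apply C. exists x. exact C2. }
  assert (inh : inhabited T).
  { destruct (Hex nil) as [x _]. exact (inhabits x). }
  set (pick := fun l : list T => epsilon inh (fun x => ~ In x l)).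
  assert (Hpick : forall l, ~ In (pick l) l) by (intro l; apply (epsilon_spec inh _ (Hex l))).
  set (g := fix g (n : nat) : list T := match n with O => nil | S n' => pick (g n') :: g n' end).
  exists (fun n => pick (g n)).
  assert (Hmem : forall n m, (m < n)%nat -> In (pick (g m)) (g n)).
  { induction n; intros m Hm; [lia|]. simpl.
    destruct (Nat.eq_dec m n) as [->|Hne]; [left; reflexivity|right; apply IHn; lia]. }
  intros n m Heq. destruct (Nat.lt_trichotomy n m) as [Hl|[He|Hl]]; auto.
  - exfalso. apply (Hpick (g m)). rewrite <- Heq. apply Hmem, Hl.
  - exfalso. apply (Hpick (g n)). rewrite Heq. apply Hmem, Hl.
Qed.

Lemma listable_to_nat (T : Type) : listable T -> card_le T nat.
Proof.
  intros [l Hl].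
  destruct l as [|d l'] eqn:El.
  - exists (fun x => O). intros x. destruct (Hl x).
  - rewrite <- El in Hl.
    assert (Hex : forall x, exists n, nth n l d = x).
    { intro x. destruct (In_nth l x d (Hl x)) as [n [_ Hn]]. exists n; exact Hn. }
    exists (fun x => epsilon (inhabits O) (fun n => nth n l d = x)).
    intros x y H.
    pose proof (epsilon_spec (inhabits O) _ (Hex x)) as Hx.
    pose proof (epsilon_spec (inhabits O) _ (Hex y)) as Hy.
    rewrite H in Hx. rewrite <- Hx. exact Hy.
Qed.

Lemma natnat : card_le (nat*nat) nat.
Proof.
  exists to_nat. intros p q H.
  rewrite <- (cancel_of_to p), <- (cancel_of_to q), H. reflexivity.
Qed.

Lemma listable_prod (A B : Type) : listable A -> listable B -> listable (A*B).
Proof.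
  intros [l1 H1] [l2 H2]. exists (list_prod l1 l2). intros [x y].
  apply in_prod; auto.
Qed.

Lemma wf_min (T : Type) (lt : T -> T -> Prop) (wf : well_founded lt) (P : T -> Prop) :
  (exists x, P x) -> exists x, P x /\ forall y, lt y x -> ~ P y.
Proof.
  intros [x Hx]. revert Hx. induction (wf x) as [x _ IH]. intros Hx.
  destruct (classic (exists y, lt y x /\ P y)) as [[y [Hy1 Hy2]]|Hn].
  - exact (IH y Hy1 Hy2).
  - exists x. split; [exact Hx|]. intros y Hy HPy. apply Hn. exists y; auto.
Qed.
Lemma R_not_nat : ~ card_le R nat.
Proof.
  intros [g Hg].
  set (Im := fun m => exists r, g r = m).
  assert (Hunb : forall N, exists m, Im m /\ (N <= m)%nat).
  { intro N. apply NNPP. intro C.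
    assert (Hb : forall r, (g r < N)%nat).
    { intro r. destruct (Nat.lt_ge_cases (g r) N) as [H|H]; auto.
      exfalso. apply C. exists (g r). split; [exists r; reflexivity|exact H]. }
    assert (HN : NoDup (map (fun n => g (INR n)) (seq 0 (S N)))).
    { apply NoDup_map_NoDup_ForallPairs.
      - intros a b _ _ H. apply INR_eq, Hg, H.
      - apply seq_NoDup. }
    assert (Hi : incl (map (fun n => g (INR n)) (seq 0 (S N))) (seq 0 N)).
    { intros x Hx. apply in_map_iff in Hx. destruct Hx as [n [<- _]].
      apply in_seq. split; [lia|]. specialize (Hb (INR n)). lia. }
    pose proof (NoDup_incl_length HN Hi) as HH.
    rewrite length_map, !length_seq in HH. lia. }
  set (cond := fun (b : option nat) (m : nat) => match b with None => True | Some p => (p < m)%nat end).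
  set (spec := fun b m => Im m /\ cond b m /\ forall m', Im m' -> cond b m' -> (m <= m')%nat).
  assert (Hspec : forall b, exists m, spec b m).
  { intro b.
    assert (Hne : exists m, Im m /\ cond b m).
    { destruct b as [p|].
      - destruct (Hunb (S p)) as [m [Hm1 Hm2]]. exists m. split; [exact Hm1|simpl; lia].
      - destruct (Hunb O) as [m [Hm1 _]]. exists m. split; [exact Hm1|exact I].
    }
    destruct (wf_min nat Peano.lt Wf_nat.lt_wf _ Hne) as [m [[Hm1 Hm2] Hm3]].
    exists m. split; [exact Hm1|split; [exact Hm2|]].
    intros m' H1 H2. destruct (Nat.le_gt_cases m m') as [H|H]; auto.
    exfalso. apply (Hm3 m' H). split; assumption. }
  set (next := fun b => epsilon (inhabits O) (spec b)).
  assert (Hnext : forall b, spec b (next b)) by (intro b; apply epsilon_spec, Hspec).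
  set (e := fix e (n : nat) : nat := match n with O => next None | S n' => next (Some (e n')) end).
  assert (HeI : forall n, Im (e n)).
  { intros [|n]; simpl; apply Hnext. }
  assert (Hinc : forall n, (e n < e (S n))%nat).
  { intro n. simpl. destruct (Hnext (Some (e n))) as [_ [H _]]. exact H. }
  assert (Hmono : forall n m, (n < m)%nat -> (e n < e m)%nat).
  { intros n m H. induction H.
    - apply Hinc.
    - specialize (Hinc m). lia. }
  assert (Heinj : forall n m, e n = e m -> n = m).
  { intros n m H. destruct (Nat.lt_trichotomy n m) as [Hl|[He|Hl]]; auto.
    - specialize (Hmono _ _ Hl). lia.
    - specialize (Hmono _ _ Hl). lia. }
  assert (Hge : forall n, (n <= e n)%nat).
  { induction n; [lia|]. specialize (Hinc n). lia. }
  assert (Hcover : forall m, Im m -> exists n, e n = m).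
  { intros m Hm.
    destruct (wf_min nat Peano.lt Wf_nat.lt_wf (fun n => (m <= e n)%nat) (ex_intro _ m (Hge m)))
      as [n0 [Hn0 Hmin]].
    exists n0. destruct n0 as [|p].
    - simpl in *. destruct (Hnext None) as [_ [_ H3]].
      specialize (H3 m Hm I). lia.
    - assert (Hp : (e p < m)%nat).
      { destruct (Nat.lt_ge_cases (e p) m) as [H|H]; auto.
        exfalso. apply (Hmin p); [lia|exact H]. }
      simpl in *. destruct (Hnext (Some (e p))) as [_ [_ H3]].
      specialize (H3 m Hm Hp). lia. }
  set (u := fun n => epsilon (inhabits 0) (fun r => g r = e n)).
  assert (Hu : forall n, g (u n) = e n) by (intro n; apply epsilon_spec, HeI).
  set (v := fun r => epsilon (inhabits O) (fun n => e n = g r)).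
  assert (Hv : forall r, e (v r) = g r).
  { intro r. apply epsilon_spec. apply Hcover. exists r; reflexivity. }
  apply (R_uncountable u). exists v. split.
  - intro n. apply Heinj. rewrite Hv, Hu. reflexivity.
  - intro r. apply Hg. rewrite Hu, Hv. reflexivity.
Qed.

Lemma option_hotel (T : Type) : card_le nat T -> card_le (option T) T.
Proof.
  intros [e He].
  set (idx := fun x => epsilon (inhabits O) (fun n => e n = x)).
  set (f := fun o : option T => match o with
     | None => e O
     | Some x => match excluded_middle_informative (exists n, e n = x) with
                 | left _ => e (S (idx x)) | right _ => x end end).
  exists f.
  assert (Hidx : forall x, (exists n, e n = x) -> e (idx x) = x)
    by (intros x H; apply (epsilon_spec (inhabits O) _ H)).
  intros [x|] [y|]; simpl.
  - destruct (excluded_middle_informative (exists n, e n = x)) as [hx|hx];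
    destruct (excluded_middle_informative (exists n, e n = y)) as [hy|hy]; intro H.
    + apply He in H. injection H as H. rewrite <- (Hidx x hx), <- (Hidx y hy), H. reflexivity.
    + exfalso. apply hy. exists (S (idx x)). exact H.
    + exfalso. apply hx. exists (S (idx y)). symmetry; exact H.
    + rewrite H; reflexivity.
  - destruct (excluded_middle_informative (exists n, e n = x)) as [hx|hx]; intro H.
    + apply He in H. discriminate.
    + exfalso. apply hx. exists O. symmetry; exact H.
  - destruct (excluded_middle_informative (exists n, e n = y)) as [hy|hy]; intro H.
    + apply He in H. discriminate.
    + exfalso. apply hy. exists O. exact H.
  - reflexivity.
Qed.

Lemma nat_of_option (T : Type) : card_le nat (option T) -> card_le nat T.
Proof.
  intros [e He].
  assert (t0 : exists t : T, True).
  { destruct (e O) as [t|] eqn:E0; [exists t; exact I|].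
    destruct (e 1%nat) as [t|] eqn:E1; [exists t; exact I|].
    rewrite <- E1 in E0. apply He in E0. discriminate. }
  destruct t0 as [t0 _].
  exists (fun n => match e (2*n)%nat with Some x => x | None =>
                    match e (2*n+1)%nat with Some x => x | None => t0 end end).
  intros n m H.
  destruct (e (2*n)%nat) as [x|] eqn:E1; destruct (e (2*m)%nat) as [y|] eqn:E2.
  - subst. rewrite <- E2 in E1. apply He in E1. lia.
  - destruct (e (2*m+1)%nat) as [z|] eqn:E3.
    + subst. rewrite <- E3 in E1. apply He in E1. lia.
    + rewrite <- E3 in E2. apply He in E2. lia.
  - destruct (e (2*n+1)%nat) as [z|] eqn:E3.
    + subst. rewrite <- E3 in E2. apply He in E2. lia.
    + rewrite <- E3 in E1. apply He in E1. lia.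
  - rewrite <- E2 in E1. apply He in E1. lia.
Qed.

Section WO.
Variable O : Type.
Variable lt : O -> O -> Prop.
Hypothesis HW : strict_well_order lt.

Let irr : forall x, ~ lt x x := proj1 HW.
Let trans : forall x y z, lt x y -> lt y z -> lt x z := proj1 (proj2 HW).
Let tot : forall x y, lt x y \/ x = y \/ lt y x := proj1 (proj2 (proj2 HW)).
Let wf : well_founded lt := proj2 (proj2 (proj2 HW)).

Definition le_ (a b : O) := lt a b \/ a = b.
Definition seg (l : O) := segment lt l.
Definition clo (l : O) := { a : O | le_ a l }.

Lemma seg_mono (m l : O) : le_ m l -> card_le (seg m) (seg l).
Proof.
  intros Hml.
  assert (H : forall a, lt a m -> lt a l).
  { intros a Ha. destruct Hml as [H|<-]; [eapply trans; eauto|exact Ha]. }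
  exists (fun x => exist _ (proj1_sig x) (H _ (proj2_sig x))).
  intros [x hx] [y hy] E. simpl in E. injection E as E. subst y.
  rewrite (proof_irrelevance _ hx hy). reflexivity.
Qed.

Lemma clo_option (l : O) : card_le (clo l) (option (seg l)).
Proof.
  set (f := fun x : clo l => match excluded_middle_informative (lt (proj1_sig x) l) with
      | left h => Some (exist (fun a => lt a l) (proj1_sig x) h) | right _ => None end).
  exists f. intros [x hx] [y hy]. unfold f; simpl.
  destruct (excluded_middle_informative (lt x l)) as [h1|h1];
  destruct (excluded_middle_informative (lt y l)) as [h2|h2]; intro E; try discriminate.
  - injection E as E. subst y. rewrite (proof_irrelevance _ hx hy). reflexivity.
  - destruct hx as [hx'|hx']; [contradiction|]. destruct hy as [hy'|hy']; [contradiction|].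
    subst x y. first [reflexivity | f_equal; apply proof_irrelevance].
Qed.

Definition initial (l : O) := forall d, lt d l -> ~ card_le (seg l) (seg d).

Lemma initial_exists (l : O) :
  exists l0, le_ l0 l /\ card_le (seg l) (seg l0) /\ initial l0.
Proof.
  destruct (wf_min O lt wf (fun x => card_le (seg l) (seg x)) (ex_intro _ l (cl_refl _)))
    as [l0 [H1 H2]].
  exists l0. split; [|split; [exact H1|]].
  - destruct (tot l0 l) as [H|[H|H]]; [left; exact H|right; exact H|].
    exfalso. apply (H2 l H (cl_refl _)).
  - intros d Hd Hc. apply (H2 d Hd). eapply cl_trans; eauto.
Qed.

Definition mx (a b : O) := if excluded_middle_informative (lt a b) then b else a.

Lemma mx_ge1 a b : le_ a (mx a b).
Proof. unfold mx. destruct (excluded_middle_informative (lt a b)); [left; auto|right; auto]. Qed.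
Lemma mx_ge2 a b : le_ b (mx a b).
Proof.
  unfold mx. destruct (excluded_middle_informative (lt a b)); [right; auto|].
  destruct (tot a b) as [H|[H|H]]; [contradiction|right; auto|left; auto].
Qed.
Lemma mx_cases a b : mx a b = a \/ mx a b = b.
Proof. unfold mx. destruct (excluded_middle_informative (lt a b)); auto. Qed.

Lemma le_trans_ a b c : le_ a b -> le_ b c -> le_ a c.
Proof.
  intros [H1|<-] [H2|<-]; [left; eapply trans; eauto|left; auto|left; auto|right; auto].
Qed.

Definition G (v w : O * O) :=
  lt (mx (fst v) (snd v)) (mx (fst w) (snd w)) \/
  (mx (fst v) (snd v) = mx (fst w) (snd w) /\
   (lt (fst v) (fst w) \/ (fst v = fst w /\ lt (snd v) (snd w)))).

Lemma G_wf : well_founded G.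
Proof.
  assert (Hm : forall m, forall v, mx (fst v) (snd v) = m -> Acc G v).
  { intro m. induction (wf m) as [m _ IHm].
    intros [a b]. simpl. revert b. induction (wf a) as [a _ IHa]. intro b.
    induction (wf b) as [b _ IHb]. intros Hab. constructor. intros [c d] Hg.
    destruct Hg as [Hg|[Hg1 [Hg2|[Hg2 Hg3]]]]; simpl in *.
    - apply (IHm _ (eq_ind _ _ Hg _ Hab) (c,d)). reflexivity.
    - apply (IHa c Hg2 d). congruence.
    - subst c. apply (IHb d Hg3). congruence. }
  intro v. apply (Hm _ v eq_refl).
Qed.

Lemma G_total v w : v <> w -> G v w \/ G w v.
Proof.
  destruct v as [a b], w as [c d]. intro Hne. unfold G; simpl.
  destruct (tot (mx a b) (mx c d)) as [H|[H|H]]; [left; left; auto| |right; left; auto].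
  destruct (tot a c) as [H1|[H1|H1]]; [left; right; auto| |right; right; auto].
  subst c. destruct (tot b d) as [H2|[H2|H2]]; [left; right; auto| |right; right; auto].
  subst; contradiction.
Qed.

Lemma G_bound v w : G v w -> le_ (fst v) (mx (fst w) (snd w)) /\ le_ (snd v) (mx (fst w) (snd w)).
Proof.
  intro Hg. assert (Hm : le_ (mx (fst v) (snd v)) (mx (fst w) (snd w))).
  { destruct Hg as [H|[H _]]; [left; auto|right; auto]. }
  split; eapply le_trans_; [apply mx_ge1|exact Hm|apply mx_ge2|exact Hm].
Qed.

Lemma le_lt_trans a b c : le_ a b -> lt b c -> lt a c.
Proof. intros [H|<-] H2; [eapply trans; eauto|auto]. Qed.

Lemma lt_le_trans a b c : lt a b -> le_ b c -> lt a c.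
Proof. intros H [H2|<-]; [eapply trans; eauto|auto]. Qed.

Lemma hess_initial : forall l, initial l -> card_le nat (seg l) -> card_le (seg l * seg l) (seg l).
Proof.
  intro l. induction (wf l) as [l _ IH]. intros Hini [e0 He0].
  set (S := seg l).
  set (GS := fun p q : S * S => G (proj1_sig (fst p), proj1_sig (snd p)) (proj1_sig (fst q), proj1_sig (snd q))).
  assert (GSwf : well_founded GS).
  { apply (wf_inverse_image (S*S) (O*O) G (fun p => (proj1_sig (fst p), proj1_sig (snd p))) G_wf). }
  set (inhS := inhabits (e0 0%nat)).
  set (F := fun (w : S * S) (rec : forall v, GS v w -> S) =>
              epsilon inhS (fun x => forall v (H : GS v w), rec v H <> x)).
  set (f := Fix GSwf (fun _ => S) F).
  assert (Hf : forall w, f w = F w (fun v _ => f v)).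
  { intro w. unfold f. apply (@Fix_eq _ _ GSwf (fun _ => S) F). intros x f1 g1 Hfg.
    assert (E : f1 = g1).
    { apply functional_extensionality_dep. intro v. apply functional_extensionality_dep. intro p. apply Hfg. }
    rewrite E. reflexivity. }
  assert (Hex : forall w, exists x, forall v (H : GS v w), f v <> x).
  { intro w. apply NNPP. intro C.
    assert (Hc : forall x : S, exists v, GS v w /\ f v = x).
    { intro x. apply NNPP. intro C2. apply C. exists x. intros v Hv Hfv. apply C2. exists v. auto. }
    set (m := mx (proj1_sig (fst w)) (proj1_sig (snd w))).
    assert (Hml : lt m l).
    { unfold m. destruct (mx_cases (proj1_sig (fst w)) (proj1_sig (snd w))) as [E|E]; rewrite E;
      apply proj2_sig. }
    set (c := fun x : S => epsilon (inhabits (fst w, snd w)) (fun v => GS v w /\ f v = x)).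
    assert (Hcs : forall x, GS (c x) w /\ f (c x) = x) by (intro x; apply epsilon_spec, Hc).
    assert (B1 : forall x, le_ (proj1_sig (fst (c x))) m) by (intro x; apply (G_bound _ _ (proj1 (Hcs x)))).
    assert (B2 : forall x, le_ (proj1_sig (snd (c x))) m) by (intro x; apply (G_bound _ _ (proj1 (Hcs x)))).
    assert (Hinj : card_le S (clo m * clo m)).
    { exists (fun x => (exist _ (proj1_sig (fst (c x))) (B1 x), exist _ (proj1_sig (snd (c x))) (B2 x))).
      intros x y E. injection E as E1 E2.
      rewrite <- (proj2 (Hcs x)), <- (proj2 (Hcs y)). f_equal.
      destruct (c x) as [[a1 p1] [b1 q1]], (c y) as [[a2 p2] [b2 q2]]. simpl in *. subst a2 b2.
      rewrite (proof_irrelevance _ p1 p2), (proof_irrelevance _ q1 q2). reflexivity. }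
    destruct (listable_or_nat (clo m)) as [Hl|Hn].
    - apply (nat_not_listable (clo m * clo m)); [|apply listable_prod; auto].
      eapply cl_trans; [exists e0; exact He0|exact Hinj].
    - assert (Hns : card_le nat (seg m)) by (apply nat_of_option; eapply cl_trans; [exact Hn|apply clo_option]).
      assert (Hcs' : card_le (clo m) (seg m)) by (eapply cl_trans; [apply clo_option|apply option_hotel; exact Hns]).
      destruct (initial_exists m) as [m0 [Hm0 [Hsm Him0]]].
      assert (Hm0l : lt m0 l) by (apply (le_lt_trans _ _ _ Hm0 Hml)).
      assert (Hn0 : card_le nat (seg m0)) by (eapply cl_trans; [exact Hns|exact Hsm]).
      pose proof (IH m0 Hm0l Him0 Hn0) as IH0.
      apply (Hini m Hml).
      eapply cl_trans; [exact Hinj|].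
      eapply cl_trans; [apply cl_prod; exact Hcs'|].
      eapply cl_trans; [apply cl_prod; exact Hsm|].
      eapply cl_trans; [exact IH0|].
      apply seg_mono; exact Hm0. }
  assert (Hspec : forall w v, GS v w -> f v <> f w).
  { intros w v Hv E. pose proof (epsilon_spec inhS _ (Hex w)) as Hs.
    rewrite (Hf w) in E. apply (Hs v Hv E). }
  exists f. intros v w E. apply NNPP. intro Hne.
  assert (Hne' : (proj1_sig (fst v), proj1_sig (snd v)) <> (proj1_sig (fst w), proj1_sig (snd w))).
  { intro E2. apply Hne. injection E2 as E3 E4.
    destruct v as [[a pa] [b pb]], w as [[c pc] [d pd]]. simpl in *. subst c d.
    rewrite (proof_irrelevance _ pa pc), (proof_irrelevance _ pb pd). reflexivity. }
  destruct (G_total _ _ Hne') as [Hg|Hg].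
  - apply (Hspec w v Hg E).
  - apply (Hspec v w Hg (eq_sym E)).
Qed.

Lemma hess (l : O) : card_le nat (seg l) -> card_le (seg l * seg l) (seg l).
Proof.
  intro Hn. destruct (initial_exists l) as [l0 [Hl0 [Hs Hi]]].
  assert (Hn0 : card_le nat (seg l0)) by (eapply cl_trans; eauto).
  pose proof (hess_initial l0 Hi Hn0) as H.
  eapply cl_trans; [apply cl_prod; exact Hs|].
  eapply cl_trans; [exact H|]. apply seg_mono; exact Hl0.
Qed.

Definition Wt (l : O) := (seg l + nat)%type.

Lemma WW (l : O) : card_le (Wt l * Wt l) (Wt l).
Proof.
  destruct (listable_or_nat (seg l)) as [Hl|Hn].
  - assert (Hsn : card_le (seg l) nat) by (apply listable_to_nat; auto).
    assert (HWn : card_le (Wt l) nat).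
    { destruct Hsn as [g Hg].
      exists (fun w => match w with inl x => (2 * g x)%nat | inr n => (2 * n + 1)%nat end).
      intros [x|n] [y|m] E; try lia.
      - f_equal. apply Hg. lia.
      - f_equal. lia. }
    eapply cl_trans; [apply cl_prod; exact HWn|].
    eapply cl_trans; [exact natnat|].
    exists inr. intros a b E; injection E; auto.
  - destruct Hn as [e He].
    assert (H1 : card_le (Wt l) (seg l * seg l)).
    { exists (fun w => match w with inl x => (x, e 0%nat) | inr n => (e n, e 1%nat) end).
      intros [x|n] [y|m] E; injection E; intros;
      (match goal with H : e ?a = e ?b |- _ => apply He in H; (discriminate || (subst; reflexivity)) | _ => subst; reflexivity end). }
    assert (H2 : card_le (seg l * seg l) (seg l)) by (apply hess; exists e; exact He).
    eapply cl_trans; [apply cl_prod; exact H1|].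
    eapply cl_trans; [apply cl_prod; exact H2|].
    eapply cl_trans; [exact H2|].
    exists inl. intros a b E; injection E; auto.
Qed.

Lemma NW (l : O) : card_le nat (Wt l).
Proof. exists inr. intros a b E; injection E; auto. Qed.

Lemma RW (l : O) : card_lt_c (seg l) -> ~ card_le R (Wt l).
Proof.
  intros Hc HR.
  destruct (listable_or_nat (seg l)) as [Hl|Hn].
  - apply R_not_nat. eapply cl_trans; [exact HR|].
    destruct (listable_to_nat _ Hl) as [g Hg].
    exists (fun w => match w with inl x => (2 * g x)%nat | inr n => (2 * n + 1)%nat end).
    intros [x|n] [y|m] E; try lia.
    + f_equal. apply Hg. lia.
    + f_equal. lia.
  - destruct Hn as [e He]. apply Hc. eapply cl_trans; [exact HR|].
    assert (H1 : card_le (Wt l) (seg l * seg l)).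
    { exists (fun w => match w with inl x => (x, e 0%nat) | inr n => (e n, e 1%nat) end).
      intros [x|n] [y|m] E; injection E; intros;
      (match goal with H : e ?a = e ?b |- _ => apply He in H; (discriminate || (subst; reflexivity)) | _ => subst; reflexivity end). }
    eapply cl_trans; [exact H1|]. apply hess. exists e; exact He.
Qed.

End WO.

Definition M0 (x : R) := (x - 1) * (x - 2).
Definition M1 (x : R) := -2 * x * (x - 2).
Definition M2 (x : R) := x * (x - 1).

Definition tame (G : R -> R -> R) := forall t h,
  4 * G t h = G 0 0 * M0 t * M0 h + G 0 1 * M0 t * M1 h + G 0 2 * M0 t * M2 h
            + G 1 0 * M1 t * M0 h + G 1 1 * M1 t * M1 h + G 1 2 * M1 t * M2 h
            + G 2 0 * M2 t * M0 h + G 2 1 * M2 t * M1 h + G 2 2 * M2 t * M2 h.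

Lemma quad_roots (f : R -> R) :
  (forall x, 2 * f x = f 0 * M0 x + f 1 * M1 x + f 2 * M2 x) ->
  (exists x0, f x0 <> 0) -> exists r1 r2, forall x, f x = 0 -> x = r1 \/ x = r2.
Proof.
  intros Hf [x0 Hx0].
  set (c2 := (f 0 - 2 * f 1 + f 2) / 2).
  set (c1 := (-3 * f 0 + 4 * f 1 - f 2) / 2).
  set (c0 := f 0).
  assert (Hc : forall x, f x = c2 * x * x + c1 * x + c0).
  { intro x. pose proof (Hf x) as H. unfold M0, M1, M2 in H. unfold c2, c1, c0. lra. }
  destruct (Req_dec c2 0) as [H2|H2].
  - destruct (Req_dec c1 0) as [H1|H1].
    + exists 0, 0. intros x Hx. exfalso. apply Hx0. rewrite Hc. rewrite Hc in Hx.
      rewrite H2, H1 in *. lra.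
    + exists (- c0 / c1), (- c0 / c1). intros x Hx. left. rewrite Hc, H2 in Hx.
      field_simplify; [|exact H1]. apply (Rmult_eq_reg_l c1); [|exact H1].
      field_simplify; [|exact H1]. lra.
  - destruct (classic (exists r, f r = 0)) as [[r Hr]|Hn].
    + exists r, (- c1 / c2 - r). intros x Hx. rewrite Hc in Hx, Hr.
      assert (E : (x - r) * (c2 * (x + r) + c1) = 0) by nra.
      apply Rmult_integral in E. destruct E as [E|E]; [left; lra|right].
      apply (Rmult_eq_reg_l c2); [|exact H2]. field_simplify; [|exact H2]. lra.
    + exists 0, 0. intros x Hx. exfalso. apply Hn. exists x; exact Hx.
Qed.

Lemma tame_h (G : R -> R -> R) : tame G -> forall h,
  2 * G 0 h = G 0 0 * M0 h + G 0 1 * M1 h + G 0 2 * M2 h /\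
  2 * G 1 h = G 1 0 * M0 h + G 1 1 * M1 h + G 1 2 * M2 h /\
  2 * G 2 h = G 2 0 * M0 h + G 2 1 * M1 h + G 2 2 * M2 h.
Proof.
  intros HG h.
  pose proof (HG 0 h) as H0. pose proof (HG 1 h) as H1. pose proof (HG 2 h) as H2.
  unfold M0, M1, M2 in *. repeat split; nra.
Qed.

Lemma tame_t (G : R -> R -> R) : tame G -> forall h t,
  2 * G t h = G 0 h * M0 t + G 1 h * M1 t + G 2 h * M2 t.
Proof.
  intros HG h t. destruct (tame_h G HG h) as [E0 [E1 E2]].
  pose proof (HG t h) as H.
  assert (E : 4 * G t h = M0 t * (2 * G 0 h) + M1 t * (2 * G 1 h) + M2 t * (2 * G 2 h)).
  { rewrite E0, E1, E2, H. ring. }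
  lra.
Qed.

Lemma avoid (X : Type) (valid : X -> Prop) (bad : X -> R -> Prop) (g : R -> R) :
  injective g ->
  (forall x, valid x -> exists r1 r2, forall v, bad x v -> v = r1 \/ v = r2) ->
  ~ card_le R (X * bool) -> exists r, forall x, valid x -> ~ bad x (g r).
Proof.
  intros Hg Hfin HR. apply NNPP. intro C. apply HR.
  assert (Hc : forall r, exists x, valid x /\ bad x (g r)).
  { intro r. apply NNPP. intro C2. apply C. exists r. intros x Hx Hb. apply C2. exists x; auto. }
  destruct (Hc 0) as [x0 _].
  set (xr := fun r => epsilon (inhabits x0) (fun x => valid x /\ bad x (g r))).
  assert (Hxr : forall r, valid (xr r) /\ bad (xr r) (g r)) by (intro r; apply epsilon_spec, Hc).
  set (rr := fun x => epsilon (inhabits (0,0)) (fun p => valid x -> forall v, bad x v -> v = fst p \/ v = snd p)).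
  assert (Hrr : forall x, valid x -> forall v, bad x v -> v = fst (rr x) \/ v = snd (rr x)).
  { intros x Hx. apply (epsilon_spec (inhabits (0,0)) (fun p => valid x -> forall v, bad x v -> v = fst p \/ v = snd p)); [|exact Hx].
    destruct (Hfin x Hx) as [r1 [r2 H]]. exists (r1, r2). intros _. exact H. }
  exists (fun r => (xr r, if excluded_middle_informative (g r = fst (rr (xr r))) then true else false)).
  intros r1 r2 E. injection E as E1 E2. apply Hg.
  destruct (Hxr r1) as [V1 B1], (Hxr r2) as [V2 B2].
  pose proof (Hrr _ V1 _ B1) as F1. pose proof (Hrr _ V2 _ B2) as F2.
  rewrite E1 in F1.
  destruct (excluded_middle_informative (g r1 = fst (rr (xr r1)))) as [h1|h1];
  destruct (excluded_middle_informative (g r2 = fst (rr (xr r2)))) as [h2|h2]; try discriminate.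
  - rewrite h1, h2, E1. reflexivity.
  - rewrite E1 in h1. destruct F1 as [F1|F1]; [contradiction|]. destruct F2 as [F2|F2]; [contradiction|].
    rewrite F1, F2. reflexivity.
Qed.

Lemma gen_choice (X : Type) (valid : X -> Prop) (G : X -> R -> R -> R) :
  (forall x, valid x -> tame (G x) /\ exists t0 h0, G x t0 h0 <> 0) ->
  ~ card_le R (X * bool) -> exists t h, 0 < h /\ forall x, valid x -> G x t h <> 0.
Proof.
  intros HG HR.
  assert (S1 : forall x, valid x -> exists r1 r2, forall v, (forall t, G x t v = 0) -> v = r1 \/ v = r2).
  { intros x Hx. destruct (HG x Hx) as [Ht [t0 [h0 H0]]].
    pose proof (tame_t _ Ht h0 t0) as E.
    assert (Ha : exists a, (a = 0 \/ a = 1 \/ a = 2) /\ G x a h0 <> 0).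
    { destruct (Req_dec (G x 0 h0) 0) as [A0|A0]; [|exists 0; auto].
      destruct (Req_dec (G x 1 h0) 0) as [A1|A1]; [|exists 1; auto].
      destruct (Req_dec (G x 2 h0) 0) as [A2|A2]; [|exists 2; auto].
      exfalso. apply H0. rewrite A0, A1, A2 in E. lra. }
    destruct Ha as [a [Ha Hna]].
    assert (Hq : forall v, 2 * G x a v = G x a 0 * M0 v + G x a 1 * M1 v + G x a 2 * M2 v).
    { intro v. destruct (tame_h _ Ht v) as [E0 [E1 E2]].
      destruct Ha as [ -> | [ -> | -> ] ]; assumption. }
    destruct (quad_roots (G x a) Hq (ex_intro _ h0 Hna)) as [r1 [r2 Hr]].
    exists r1, r2. intros v Hv. apply Hr, Hv. }
  destruct (avoid X valid (fun x v => forall t, G x t v = 0) exp exp_inv S1 HR) as [r Hr].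
  set (h := exp r).
  assert (S2 : forall x, valid x -> exists r1 r2, forall v, G x v h = 0 -> v = r1 \/ v = r2).
  { intros x Hx. destruct (HG x Hx) as [Ht _].
    apply quad_roots.
    - intro t. apply tame_t, Ht.
    - apply not_all_ex_not. apply (Hr x Hx). }
  destruct (avoid X valid (fun x v => G x v h = 0) (fun v => v) (fun a b E => E) S2 HR) as [t Ht].
  exists t, h. split; [apply exp_pos|]. exact Ht.
Qed.

Definition xproj (z y : point) : R := (fst y * snd z - fst z * snd y) / (snd z - snd y).

Lemma xproj_eq (z y : point) (u : R) : upper z -> lower y ->
  (xproj z y = u <-> (fst y - u) * snd z = (fst z - u) * snd y).
Proof.
  unfold upper, lower, xproj. intros Hz Hy. split; intro H.
  - rewrite <- H. field. lra.
  - apply (Rmult_eq_reg_r (snd z - snd y)); [|lra]. field_simplify; [|lra]. lra.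
Qed.

Lemma sees_iff (A : point -> Prop) (z y : point) : upper z -> lower y ->
  (sees A z y <-> A (xproj z y, 0)).
Proof.
  unfold upper, lower, sees, seg_pt. intros Hz Hy. destruct z as [z1 z2], y as [y1 y2]; simpl in *.
  set (t0 := z2 / (z2 - y2)).
  assert (Ht0 : 0 <= t0 <= 1).
  { unfold t0. split.
    - apply Rmult_le_pos; [lra|]. left. apply Rinv_0_lt_compat. lra.
    - apply (Rmult_le_reg_r (z2 - y2)); [lra|]. field_simplify; [|lra]. lra. }
  assert (Hpt : ((1 - t0) * z1 + t0 * y1, (1 - t0) * z2 + t0 * y2) = (xproj (z1, z2) (y1, y2), 0)).
  { unfold xproj, t0; simpl. f_equal; field; lra. }
  split.
  - intro H. specialize (H t0 Ht0). rewrite Hpt in H. unfold upper, lower in H; simpl in H.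
    destruct H as [H|[H|H]]; [lra|exact H|lra].
  - intros HA t Ht.
    destruct (Rtotal_order ((1 - t) * z2 + t * y2) 0) as [H|[H|H]].
    + right; right. unfold lower; simpl. exact H.
    + right; left. assert (Et : t = t0).
      { unfold t0. apply (Rmult_eq_reg_r (z2 - y2)); [|lra]. field_simplify; [|lra]. lra. }
      rewrite Et, Hpt. exact HA.
    + left. unfold upper; simpl. exact H.
Qed.

Lemma collinear_of_proj (z y y' : point) (u : R) : upper z -> lower y -> lower y' ->
  xproj z y = u -> xproj z y' = u -> (fst y - u) * snd y' = (fst y' - u) * snd y.
Proof.
  intros Hz Hy Hy' H1 H2.
  apply (xproj_eq _ _ _ Hz Hy) in H1. apply (xproj_eq _ _ _ Hz Hy') in H2.
  unfold upper in Hz.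
  apply (Rmult_eq_reg_r (snd z)); [|lra].
  replace ((fst y - u) * snd y' * snd z) with (((fst y - u) * snd z) * snd y') by ring.
  replace ((fst y' - u) * snd y * snd z) with (((fst y' - u) * snd z) * snd y) by ring.
  rewrite H1, H2. ring.
Qed.

Lemma uniq2 (z1 z2 y y' : point) (u w : R) : upper z1 -> upper z2 -> lower y -> lower y' ->
  xproj z1 y = u -> xproj z2 y = u -> xproj z1 y' = w -> xproj z2 y' = w ->
  ~ ((fst y - u) * snd y' = (fst y' - u) * snd y) -> z1 = z2.
Proof.
  intros H1 H2 Hy Hy' E1 E2 E3 E4 Hnc.
  apply (xproj_eq _ _ _ H1 Hy) in E1. apply (xproj_eq _ _ _ H2 Hy) in E2.
  apply (xproj_eq _ _ _ H1 Hy') in E3. apply (xproj_eq _ _ _ H2 Hy') in E4.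
  unfold upper, lower in *.
  destruct z1 as [a1 a2], z2 as [b1 b2], y as [y1 y2], y' as [x1 x2]; simpl in *.
  set (c := (y1 - u) * x2 - (x1 - w) * y2).
  assert (Ca : a2 * c = (a1 - u) * y2 * x2 - (a1 - w) * x2 * y2).
  { unfold c. replace (a2 * ((y1 - u) * x2 - (x1 - w) * y2)) with ((y1 - u) * a2 * x2 - (x1 - w) * a2 * y2) by ring.
    rewrite E1, E3. ring. }
  assert (Cb : b2 * c = (b1 - u) * y2 * x2 - (b1 - w) * x2 * y2).
  { unfold c. replace (b2 * ((y1 - u) * x2 - (x1 - w) * y2)) with ((y1 - u) * b2 * x2 - (x1 - w) * b2 * y2) by ring.
    rewrite E2, E4. ring. }
  assert (Ca' : a2 * c = (w - u) * y2 * x2) by (rewrite Ca; ring).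
  assert (Cb' : b2 * c = (w - u) * y2 * x2) by (rewrite Cb; ring).
  destruct (Req_dec c 0) as [Hc|Hc].
  - exfalso. rewrite Hc in Ca'. assert (Hwu : w = u).
    { assert (E : (w - u) * (y2 * x2) = 0) by nra.
      apply Rmult_integral in E. destruct E as [E|E]; [lra|]. nra. }
    subst w. apply Hnc. unfold c in Hc. lra.
  - assert (Eb : a2 = b2).
    { apply (Rmult_eq_reg_r c); [|exact Hc]. lra. }
    subst b2. assert (Ea : a1 = b1).
    { assert (E : (a1 - b1) * y2 = 0) by nra. apply Rmult_integral in E. destruct E; lra. }
    subst; reflexivity.
Qed.

Definition det3 (a1 a2 a3 b1 b2 b3 c1 c2 c3 : R) :=
  a1 * (b2 * c3 - b3 * c2) - a2 * (b1 * c3 - b3 * c1) + a3 * (b1 * c2 - b2 * c1).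

Lemma det3_zero (a1 a2 a3 b1 b2 b3 c1 c2 c3 x y : R) :
  a1 * x + a2 * y + a3 = 0 -> b1 * x + b2 * y + b3 = 0 -> c1 * x + c2 * y + c3 = 0 ->
  det3 a1 a2 a3 b1 b2 b3 c1 c2 c3 = 0.
Proof.
  intros Ha Hb Hc. unfold det3.
  replace a3 with (-(a1 * x + a2 * y)) by lra.
  replace b3 with (-(b1 * x + b2 * y)) by lra.
  replace c3 with (-(c1 * x + c2 * y)) by lra. ring.
Qed.

Definition dd (p : point) := - snd p.

Definition G3 (yi ai yj aj ym : point) (q t h : R) :=
  let Ui := dd ai * t + fst ai * h in
  let Uj := dd aj * t + fst aj * h in
  det3 (dd yi * (h + dd ai)) (fst yi * (h + dd ai) - Ui) (- dd yi * Ui)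
       (dd yj * (h + dd aj)) (fst yj * (h + dd aj) - Uj) (- dd yj * Uj)
       (dd ym) (fst ym - q) (- dd ym * q).

Lemma G3_tame yi ai yj aj ym q : tame (G3 yi ai yj aj ym q).
Proof. unfold tame, G3, det3, M0, M1, M2. intros. ring. Qed.

Lemma G3_at0 yi ai yj aj ym q t :
  G3 yi ai yj aj ym q t 0 = dd ai * dd aj * dd ym * (dd yi * (fst yj - t) - dd yj * (fst yi - t)) * (t - q).
Proof. unfold G3, det3. ring. Qed.

Lemma G3_wit yi ai yj aj ym q : lower yi -> lower yj -> lower ai -> lower aj -> lower ym -> yi <> yj ->
  exists t0 h0, G3 yi ai yj aj ym q t0 h0 <> 0.
Proof.
  unfold lower, dd. intros H1 H2 H3 H4 H5 Hne.
  set (lam := fun t => - snd yi * (fst yj - t) - - snd yj * (fst yi - t)).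
  destruct (Req_dec (lam (q+1)) 0) as [L1|L1]; [destruct (Req_dec (lam (q+2)) 0) as [L2|L2]|].
  - exfalso. unfold lam in L1, L2. apply Hne.
    assert (Ed : snd yi = snd yj) by lra.
    assert (Ef : fst yi = fst yj).
    { rewrite Ed in L1. assert (E : - snd yj * (fst yj - fst yi) = 0) by lra.
      apply Rmult_integral in E. destruct E; lra. }
    destruct yi, yj; simpl in *; subst; reflexivity.
  - exists (q + 2), 0. rewrite G3_at0. unfold dd. fold (lam (q+2)).
    repeat apply Rmult_integral_contrapositive_currified; try lra.
  - exists (q + 1), 0. rewrite G3_at0. unfold dd. fold (lam (q+1)).
    repeat apply Rmult_integral_contrapositive_currified; try lra.
Qed.

Definition G1 (a : point) (c t h : R) := dd a * t + fst a * h - c * (h + dd a).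

Lemma G1_tame a c : tame (G1 a c).
Proof. unfold tame, G1, M0, M1, M2. intros. ring. Qed.

Lemma G1_wit a c : lower a -> exists t0 h0, G1 a c t0 h0 <> 0.
Proof. unfold lower, G1, dd. intros H. exists (c + 1), 0. intro E. ring_simplify in E. lra. Qed.

Lemma proj_upper (t h : R) (a : point) : 0 < h -> lower a ->
  (h + dd a) * xproj (t, h) a = dd a * t + fst a * h.
Proof. unfold lower, dd, xproj. simpl. intros. field. lra. Qed.

Definition d0 : point := (0, 0).

Definition Qpt (lK : list point) (u : R) := exists y y', In y lK /\ In y' lK /\ y <> y' /\
  (fst y - u) * snd y' = (fst y' - u) * snd y.

Definition Inv (lK : list point) (S : R -> Prop) :=
  (forall u, S u -> ~ Qpt lK u) /\ ~ (exists z, upper z /\ forall y, In y lK -> S (xproj z y)).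

Definition Pset (la : list point) (z : point) (u : R) :=
  exists r, (r < length la)%nat /\ u = xproj z (nth r la d0).

Lemma nth_lower (l : list point) r : (r < length l)%nat -> (forall y, In y l -> lower y) -> lower (nth r l d0).
Proof. intros H1 H2. apply H2, nth_In, H1. Qed.

Section CW.
Variable W : Type.
Hypothesis WW : card_le (W * W) W.
Hypothesis NW : card_le nat W.
Lemma cW_prod A B : card_le A W -> card_le B W -> card_le (A * B) W.
Proof. intros H1 H2. eapply cl_trans; [apply cl_prod; eauto|exact WW]. Qed.
Lemma cW_sum A B : card_le A W -> card_le B W -> card_le (A + B) W.
Proof.
  intros H1 H2. eapply cl_trans; [apply cl_sum; eauto|].
  eapply cl_trans; [|exact WW]. destruct NW as [e He].
  exists (fun s => match s with inl a => (a, e 0%nat) | inr b => (b, e 1%nat) end).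
  intros [a|a] [b|b] E; injection E; intros; subst; try reflexivity;
  match goal with H : e _ = e _ |- _ => apply He in H; discriminate end.
Qed.
Lemma cW_bool : card_le bool W.
Proof.
  eapply cl_trans; [|exact NW]. exists (fun b : bool => if b then 1%nat else 0%nat).
  intros [|] [|] E; auto; discriminate.
Qed.
End CW.

Lemma row_zero (z' y a : point) (t h p : R) : upper z' -> lower y -> xproj z' y = p ->
  (h + dd a) * p = dd a * t + fst a * h ->
  dd y * (h + dd a) * fst z' + (fst y * (h + dd a) - (dd a * t + fst a * h)) * snd z'
  + - dd y * (dd a * t + fst a * h) = 0.
Proof.
  intros Hz Hy Hp Hu. rewrite <- Hu. apply (xproj_eq _ _ _ Hz Hy) in Hp.
  replace (dd y * (h + dd a) * fst z' + (fst y * (h + dd a) - (h + dd a) * p) * snd z' + - dd y * ((h + dd a) * p))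
    with ((h + dd a) * ((fst y - p) * snd z' - (fst z' - p) * snd y)) by (unfold dd; ring).
  rewrite Hp. ring.
Qed.

Lemma row_zero0 (z' y : point) (p : R) : upper z' -> lower y -> xproj z' y = p ->
  dd y * fst z' + (fst y - p) * snd z' + - dd y * p = 0.
Proof.
  intros Hz Hy Hp. apply (xproj_eq _ _ _ Hz Hy) in Hp.
  replace (dd y * fst z' + (fst y - p) * snd z' + - dd y * p)
    with ((fst y - p) * snd z' - (fst z' - p) * snd y) by (unfold dd; ring).
  rewrite Hp. ring.
Qed.

Section Step.
Variable k : nat.
Hypothesis hk : (2 <= k)%nat.
Variable lK : list point.
Hypothesis lK_nd : NoDup lK.
Hypothesis lK_len : length lK = S k.
Hypothesis lK_low : forall y, In y lK -> lower y.

Let yK i := nth i lK d0.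

Definition uij (y y' : point) := (fst y' * snd y - fst y * snd y') / (snd y - snd y').

Definition zz (u w : R) (y y' : point) :=
  epsilon (inhabits (0, 1)) (fun z' => upper z' /\ xproj z' y = u /\ xproj z' y' = w).

Lemma step (W : Type) (WW : card_le (W * W) W) (NW : card_le nat W) (RW : ~ card_le R W)
  (SS : R -> Prop) (HS : card_le {u | SS u} W) (HI : Inv lK SS)
  (la : list point) (la_len : length la = k) (la_low : forall y, In y la -> lower y) :
  exists z, upper z /\ Inv lK (fun u => SS u \/ Pset la z u).
Proof.
  set (aa := fun r => nth r la d0).
  set (Su := {u | SS u}).
  set (X := (((nat * nat * nat) + ((Su * Su) * (nat * nat * nat * nat))) + (Su * (nat * nat * nat * nat * nat)))%type).
  set (valid := fun x : X => match x with
    | inl (inl (i, j, r)) => (i < S k)%nat /\ (j < S k)%nat /\ (r < k)%nat /\ snd (yK i) <> snd (yK j)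
    | inl (inr (_, (i, j, m, r))) => (i < S k)%nat /\ (j < S k)%nat /\ (m < S k)%nat /\ (r < k)%nat
    | inr (_, (i, j, r, s, m)) => (i < S k)%nat /\ (j < S k)%nat /\ (m < S k)%nat /\ (r < k)%nat /\ (s < k)%nat /\ yK i <> yK j
    end).
  set (GG := fun x : X => match x with
    | inl (inl (i, j, r)) => G1 (aa r) (uij (yK i) (yK j))
    | inl (inr ((u, w), (i, j, m, r))) => G1 (aa r) (xproj (zz (proj1_sig u) (proj1_sig w) (yK i) (yK j)) (yK m))
    | inr (q, (i, j, r, s, m)) => G3 (yK i) (aa r) (yK j) (aa s) (yK m) (proj1_sig q)
    end).
  assert (lowK : forall i, (i < S k)%nat -> lower (yK i)).
  { intros i Hi. apply nth_lower; [lia|exact lK_low]. }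
  assert (lowa : forall r, (r < k)%nat -> lower (aa r)).
  { intros r Hr. apply nth_lower; [lia|exact la_low]. }
  destruct (gen_choice X valid GG) as [t [h [Hh Hgood]]].
  { intros [[[[i j] r]|[[u w] [[[i j] m] r]]]|[q [[[[i j] r] s] m]]]; simpl; intro Hv.
    - split; [apply G1_tame|apply G1_wit, lowa; tauto].
    - split; [apply G1_tame|apply G1_wit, lowa; tauto].
    - split; [apply G3_tame|apply G3_wit; try apply lowK; try apply lowa; tauto]. }
  { intro HR. apply RW. eapply cl_trans; [exact HR|].
    assert (Hn : card_le nat W) by exact NW.
    apply (cW_prod W WW); [|apply (cW_bool W NW)].
    apply (cW_sum W WW NW); [apply (cW_sum W WW NW)|].
    - apply (cW_prod W WW); [apply (cW_prod W WW)|]; auto.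
    - apply (cW_prod W WW); [apply (cW_prod W WW); auto|].
      repeat (apply (cW_prod W WW); auto).
    - apply (cW_prod W WW); auto. repeat (apply (cW_prod W WW); auto). }
  set (z := (t, h)). assert (Hz : upper z) by (unfold upper; simpl; lra).
  exists z. split; [exact Hz|].
  assert (HU : forall r, (r < k)%nat -> (h + dd (aa r)) * xproj z (aa r) = dd (aa r) * t + fst (aa r) * h).
  { intros r Hr. apply proj_upper; [exact Hh|apply lowa, Hr]. }
  assert (HP : forall r c, (r < k)%nat -> xproj z (aa r) = c -> G1 (aa r) c t h = 0).
  { intros r c Hr Hc. unfold G1. rewrite <- (HU r Hr). rewrite Hc. ring. }
  assert (idx : forall y, In y lK -> exists i, (i < S k)%nat /\ yK i = y).
  { intros y Hy. destruct (In_nth lK y d0 Hy) as [i [Hi E]]. exists i. split; [lia|exact E]. }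
  assert (yK_inj : forall i j, (i < S k)%nat -> (j < S k)%nat -> yK i = yK j -> i = j).
  { intros i j Hi Hj E. apply (proj1 (NoDup_nth lK d0) lK_nd); try lia. exact E. }
  assert (QP : forall u, Pset la z u -> ~ Qpt lK u).
  { intros u [r [Hr Eu]] [y [y' [Hy [Hy' [Hne Hc]]]]].
    rewrite la_len in Hr. fold (aa r) in Eu.
    destruct (idx y Hy) as [i [Hi Ei]], (idx y' Hy') as [j [Hj Ej]].
    pose proof (lK_low y Hy) as ly. pose proof (lK_low y' Hy') as ly'. unfold lower in ly, ly'.
    destruct (Req_dec (snd y) (snd y')) as [Es|Es].
    - apply Hne. rewrite Es in Hc.
      assert (Ef : fst y = fst y').
      { assert (E : (fst y - fst y') * snd y' = 0) by lra. apply Rmult_integral in E. destruct E; lra. }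
      destruct y, y'; simpl in *; subst; reflexivity.
    - apply (Hgood (inl (inl (i, j, r)))).
      + unfold valid. rewrite Ei, Ej. repeat split; auto.
      + unfold GG. rewrite Ei, Ej. apply HP; [exact Hr|]. rewrite <- Eu. unfold uij.
        apply (Rmult_eq_reg_r (snd y - snd y')); [|lra]. field_simplify; [|lra]. lra. }
  split.
  { intros u [Hu|Hu]; [apply (proj1 HI u Hu)|apply QP, Hu]. }
  intros [z' [Hz' Hall]].
  set (pi := fun j => xproj z' (yK j)).
  assert (Hall' : forall j, (j < S k)%nat -> SS (pi j) \/ Pset la z (pi j)).
  { intros j Hj. apply Hall. unfold yK. apply nth_In. lia. }
  destruct (classic (exists i j, (i < S k)%nat /\ (j < S k)%nat /\ i <> j /\ SS (pi i) /\ SS (pi j)))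
    as [[i [j [Hi [Hj [Hij [Si Sj]]]]]]|NA].
  - assert (Hm : exists m, (m < S k)%nat /\ ~ SS (pi m)).
    { apply NNPP; intro C. apply (proj2 HI). exists z'. split; [exact Hz'|]. intros y Hy.
      destruct (idx y Hy) as [m [Hm Em]]. rewrite <- Em. apply NNPP. intro C2. apply C. exists m. split; auto. }
    destruct Hm as [m [Hm Sm]].
    destruct (Hall' m Hm) as [C|[r [Hr Er]]]; [contradiction|]. rewrite la_len in Hr.
    apply (Hgood (inl (inr ((exist SS (pi i) Si, exist SS (pi j) Sj), (i, j, m, r))))).
    + unfold valid. auto.
    + unfold GG. simpl. apply HP; [exact Hr|].
      assert (Ezz : zz (pi i) (pi j) (yK i) (yK j) = z').
      { assert (HPz : (fun z'' => upper z'' /\ xproj z'' (yK i) = pi i /\ xproj z'' (yK j) = pi j)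
                        (zz (pi i) (pi j) (yK i) (yK j))).
        { unfold zz. apply epsilon_spec. exists z'. split; [exact Hz'|split; reflexivity]. }
        destruct HPz as [U1 [U2 U3]].
        apply (uniq2 _ _ (yK i) (yK j) (pi i) (pi j) U1 Hz' (lowK i Hi) (lowK j Hj) U2 eq_refl U3 eq_refl).
        intro Hc. apply (proj1 HI (pi i) Si). exists (yK i), (yK j).
        repeat split; try (unfold yK; apply nth_In; lia); auto.
        all: try (intro E; apply Hij; apply yK_inj; auto). }
      rewrite Ezz. symmetry. exact Er.
  - destruct (classic (exists m, (m < S k)%nat /\ SS (pi m))) as [[m [Hm Sm]]|NB].
    + assert (Hsel : exists i j, (i < 3)%nat /\ (j < 3)%nat /\ i <> j /\ i <> m /\ j <> m).
      { destruct m as [|[|m']]; [exists 1%nat, 2%nat|exists 0%nat, 2%nat|exists 0%nat, 1%nat]; lia. }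
      destruct Hsel as [i [j [Hi [Hj [Hij [Him Hjm]]]]]].
      assert (Pi : Pset la z (pi i)).
      { destruct (Hall' i ltac:(lia)) as [C|C]; [|exact C].
        exfalso. apply NA. exists i, m. repeat split; auto; lia. }
      assert (Pj : Pset la z (pi j)).
      { destruct (Hall' j ltac:(lia)) as [C|C]; [|exact C].
        exfalso. apply NA. exists j, m. repeat split; auto; lia. }
      destruct Pi as [r [Hr Er]], Pj as [s [Hs Es]]. rewrite la_len in Hr, Hs.
      apply (Hgood (inr (exist SS (pi m) Sm, (i, j, r, s, m)))).
      * unfold valid. repeat split; try lia. intro E. apply Hij. apply yK_inj; [lia|lia|exact E].
      * unfold GG. simpl. unfold G3.
        apply (det3_zero _ _ _ _ _ _ _ _ _ (fst z') (snd z')).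
        -- apply (row_zero z' (yK i) (aa r) t h (pi i) Hz' (lowK i ltac:(lia)) eq_refl).
           rewrite Er. apply HU, Hr.
        -- apply (row_zero z' (yK j) (aa s) t h (pi j) Hz' (lowK j ltac:(lia)) eq_refl).
           rewrite Es. apply HU, Hs.
        -- apply (row_zero0 z' (yK m) (pi m) Hz' (lowK m Hm) eq_refl).
    + assert (AllP : forall y, In y lK -> Pset la z (xproj z' y)).
      { intros y Hy. destruct (idx y Hy) as [m [Hm Em]]. rewrite <- Em.
        destruct (Hall' m Hm) as [C|C]; [exfalso; apply NB; exists m; auto|exact C]. }
      destruct (classic (NoDup (map (xproj z') lK))) as [ND|NND].
      * exfalso.
        assert (Hincl : incl (map (xproj z') lK) (map (fun r => xproj z (nth r la d0)) (seq 0 k))).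
        { intros u Hu. apply in_map_iff in Hu. destruct Hu as [y [Ey Hy]].
          destruct (AllP y Hy) as [r [Hr Er]]. rewrite <- Ey, Er. apply (in_map (fun r => xproj z (nth r la d0))). apply in_seq. lia. }
        pose proof (NoDup_incl_length ND Hincl) as HL.
        rewrite !length_map, length_seq, lK_len in HL. lia.
      * assert (NFP : ~ ForallPairs (fun x y => xproj z' x = xproj z' y -> x = y) lK).
        { intro F. apply NND. apply NoDup_map_NoDup_ForallPairs; auto. }
        unfold ForallPairs in NFP.
        apply not_all_ex_not in NFP. destruct NFP as [y NFP].
        apply not_all_ex_not in NFP. destruct NFP as [y' NFP].
        apply imply_to_and in NFP. destruct NFP as [Hy NFP].
        apply imply_to_and in NFP. destruct NFP as [Hy' NFP].
        apply imply_to_and in NFP. destruct NFP as [Exy Hne].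
        apply (QP (xproj z' y) (AllP y Hy)). exists y, y'. repeat split; auto.
        apply (collinear_of_proj z' y y' (xproj z' y) Hz' (lK_low y Hy) (lK_low y' Hy') eq_refl).
        symmetry; exact Exy.
Qed.
End Step.

Theorem proposition2p3
  (k : nat) (hk : (2 <= k)%nat)
  (K : point -> Prop)
  (HKcard : has_card K (S k)) (HKlow : forall y, K y -> lower y)
  (O : Type) (lt : O -> O -> Prop) (HO : initial_ordinal_c O lt)
  (a : O -> point -> Prop)
  (Ha_in_U : forall l, has_card (a l) k /\ (forall y, a l y -> lower y))
  (Ha_inj : forall l1 l2, (forall p, a l1 p <-> a l2 p) -> l1 = l2)
  (Ha_surj : forall Sk : point -> Prop,
      has_card Sk k -> (forall y, Sk y -> lower y) ->
      exists l, forall p, a l p <-> Sk p) :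
  exists A B : O -> point -> Prop,
    (forall l1 l2, lt l1 l2 ->
       (forall p, A l1 p -> A l2 p) /\ (forall p, B l1 p -> B l2 p)) /\
    (forall l,
       (* (1) *)
       (forall p, A l p -> on_x_axis p) /\ (forall p, B l p -> on_x_axis p) /\
       (* (2) *)
       (forall p, ~ (A l p /\ B l p)) /\
       (* (3) |A_l|, |B_l| <= max(|l|, aleph_0) < c *)
       card_le {p | A l p} (segment lt l + nat)%type /\
       card_le {p | B l p} (segment lt l + nat)%type /\
       card_lt_c (segment lt l + nat)%type /\
       (* (4) *)
       (exists z, upper z /\ forall y, a l y -> sees (A l) z y) /\
       ~ (exists z, upper z /\ forall y, K y -> sees (A l) z y)).
Proof.
  destruct HO as [HW [_ Hseg]].
  pose proof HW as HW'. destruct HW' as [irr [trans [tot wf]]].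
  destruct (constructive_indefinite_description _ HKcard) as [lK [lK_nd [lK_len lK_iff]]].
  assert (lK_low : forall y, In y lK -> lower y) by (intros y Hy; apply HKlow, lK_iff, Hy).
  set (la := fun l => proj1_sig (constructive_indefinite_description _ (proj1 (Ha_in_U l)))).
  assert (la_spec : forall l, NoDup (la l) /\ length (la l) = k /\ forall p, a l p <-> In p (la l)).
  { intro l. unfold la. destruct (constructive_indefinite_description _ (proj1 (Ha_in_U l))) as [x Hx]. exact Hx. }
  assert (la_low : forall l y, In y (la l) -> lower y).
  { intros l y Hy. apply (proj2 (Ha_in_U l)). apply (proj2 (proj2 (la_spec l))). exact Hy. }
  set (F := fun (l : O) (rec : forall m, lt m l -> point) =>
     epsilon (inhabits ((0, 1) : point)) (fun z => upper z /\
        Inv lK (fun u => (exists m (H : lt m l), Pset (la m) (rec m H) u) \/ Pset (la l) z u))).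
  set (zf := Fix wf (fun _ => point) F).
  assert (Hzf : forall l, zf l = F l (fun m _ => zf m)).
  { intro l. unfold zf. apply (@Fix_eq _ _ wf (fun _ => point) F). intros x f1 g1 Hfg.
    assert (E : f1 = g1).
    { apply functional_extensionality_dep. intro v. apply functional_extensionality_dep. intro p. apply Hfg. }
    rewrite E. reflexivity. }
  set (Slt := fun l u => exists m (H : lt m l), Pset (la m) (zf m) u).
  set (Sle := fun l u => Slt l u \/ Pset (la l) (zf l) u).
  assert (mono : forall m l u, lt m l -> Sle m u -> Slt l u).
  { intros m l u Hml [[m' [Hm' Hp]]|Hp].
    - exists m', (trans _ _ _ Hm' Hml). exact Hp.
    - exists m, Hml. exact Hp. }
  assert (cardSle : forall l, card_le {u | Sle l u} (Wt O lt l)).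
  { intro l.
    set (val := fun (p : option (seg O lt l) * nat) => match fst p with
        | Some m => xproj (zf (proj1_sig m)) (nth (snd p) (la (proj1_sig m)) d0)
        | None => xproj (zf l) (nth (snd p) (la l) d0) end).
    assert (Hex : forall x : {u | Sle l u}, exists p, proj1_sig x = val p).
    { intros [u pu]; simpl. destruct pu as [[m [Hm [r [_ Er]]]]|[r [_ Er]]].
      - exists (Some (exist _ m Hm), r). exact Er.
      - exists (None, r). exact Er. }
    set (g := fun x : {u | Sle l u} => epsilon (inhabits (None, 0%nat)) (fun p => proj1_sig x = val p)).
    assert (Hg : forall x, proj1_sig x = val (g x)) by (intro x; apply epsilon_spec, Hex).
    assert (C1 : card_le {u | Sle l u} (option (seg O lt l) * nat)).
    { exists g. intros x y E. pose proof (Hg x) as Ex. pose proof (Hg y) as Ey. rewrite E in Ex.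
      destruct x as [x px], y as [y py]. simpl in *. assert (x = y) by congruence. subst y.
      f_equal. apply proof_irrelevance. }
    eapply cl_trans; [exact C1|]. apply (cW_prod _ (WW O lt HW l)); [|apply NW].
    exists (fun o => match o with Some m => inl m | None => inr 0%nat end).
    intros [m1|] [m2|] E; try discriminate; auto. injection E as E; subst; reflexivity. }
  assert (Main : forall l, upper (zf l) /\ Inv lK (Sle l)).
  { intro l. induction (wf l) as [l _ IH].
    assert (HIlt : Inv lK (Slt l)).
    { split.
      - intros u [m [Hm Hp]]. apply (proj1 (proj2 (IH m Hm))). right. exact Hp.
      - intros [z' [Hz' Hall]].
        assert (Hch : forall L : list point, (forall y, In y L -> Slt l (xproj z' y)) ->
                  L = nil \/ exists m, lt m l /\ forall y, In y L -> Sle m (xproj z' y)).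
        { induction L as [|y L IHL]; intros HL; [left; reflexivity|right].
          destruct (HL y (or_introl eq_refl)) as [my [Hmy Hpy]].
          destruct (IHL (fun y' Hy' => HL y' (or_intror Hy'))) as [->|[m' [Hm' Hall']]].
          - exists my. split; [exact Hmy|]. intros y' [<-|[]]. right. exact Hpy.
          - destruct (tot my m') as [Hlt|[Heq|Hlt]].
            + exists m'. split; [exact Hm'|]. intros y' [<-|Hy']; [|apply Hall', Hy'].
              left. exists my, Hlt. exact Hpy.
            + subst m'. exists my. split; [exact Hmy|]. intros y' [<-|Hy']; [|apply Hall', Hy'].
              right. exact Hpy.
            + exists my. split; [exact Hmy|]. intros y' [<-|Hy']; [right; exact Hpy|].
              left. apply (mono m' my); [exact Hlt|apply Hall', Hy']. }
        destruct (Hch lK Hall) as [E|[m [Hm Hallm]]].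
        + rewrite E in lK_len. discriminate.
        + apply (proj2 (proj2 (IH m Hm))). exists z'. split; [exact Hz'|exact Hallm]. }
    assert (HSlt : card_le {u | Slt l u} (Wt O lt l)).
    { eapply cl_trans; [|apply cardSle].
      exists (fun x => exist (Sle l) (proj1_sig x) (or_introl (proj2_sig x))).
      intros [x px] [y py] E. simpl in E. injection E as E. subst y. f_equal. apply proof_irrelevance. }
    destruct (step k hk lK lK_nd lK_len lK_low (Wt O lt l) (WW O lt HW l) (NW O lt l) (RW O lt HW l (Hseg l))
                (Slt l) HSlt HIlt (la l) (proj1 (proj2 (la_spec l))) (la_low l)) as [z [Hz HIz]].
    assert (Hsp : upper (zf l) /\ Inv lK (fun u => Slt l u \/ Pset (la l) (zf l) u)).
    { rewrite (Hzf l). unfold F. apply (epsilon_spec (inhabits ((0,1) : point))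
        (fun z => upper z /\ Inv lK (fun u => (exists m (H : lt m l), Pset (la m) (zf m) u) \/ Pset (la l) z u))).
      exists z. split; [exact Hz|exact HIz]. }
    exact Hsp. }
  exists (fun l p => snd p = 0 /\ Sle l (fst p)), (fun _ _ => False).
  split.
  { intros l1 l2 H12. split; [|intros p []].
    intros p [Hp1 Hp2]. split; [exact Hp1|]. left. apply (mono l1 l2); auto. }
  intro l. split; [intros p [Hp _]; exact Hp|].
  split; [intros p []|].
  split; [intros p [_ []]|].
  split.
  { eapply cl_trans; [|apply cardSle].
    exists (fun x => exist (Sle l) (fst (proj1_sig x)) (proj2 (proj2_sig x))).
    intros [[x1 x2] [px1 px2]] [[y1 y2] [py1 py2]] E. simpl in *. injection E as E. subst.
    f_equal. apply proof_irrelevance. }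
  split.
  { exists (fun p => False_rect (segment lt l + nat)%type (proj2_sig p)). intros [x []]. }
  split.
  { apply (RW O lt HW l (Hseg l)). }
  destruct (Main l) as [Hz [_ HInv]].
  split.
  { exists (zf l). split; [exact Hz|]. intros y Hy.
    assert (Hyl : In y (la l)) by (apply (proj2 (proj2 (la_spec l))), Hy).
    apply sees_iff; [exact Hz|apply (la_low l y Hyl)|]. simpl. split; [reflexivity|].
    right. destruct (In_nth (la l) y d0 Hyl) as [r [Hr Er]]. exists r. split; [exact Hr|]. rewrite Er. reflexivity. }
  intros [z [Hz' Hall]]. apply HInv. exists z. split; [exact Hz'|].
  intros y Hy. assert (HK : K y) by (apply lK_iff, Hy).
  specialize (Hall y HK). apply sees_iff in Hall; [|exact Hz'|apply lK_low, Hy].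
  destruct Hall as [_ H]. exact H.
Qed.
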